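(* Let $G$ be a group with identity $e$ and let $A$ be a finite set with $|A|\ge 2$. Let $S\subseteq G$ be a finite subset with $e\in S$ and $|S|\ge 2$, and let $\mu:A^S\to A$ be a local map, generated by the pair $(\mathcal P,f)$. Then: (1) If $|\mathcal P|\neq |A|^{|S|}-|A|^{|S|-1}$, then $e\in\mathrm{mms}(\mu)$. (2) If $|\mathcal P|$ is not a multiple of $|A|$, then $\mathrm{mms}(\mu)=S$. (3) If $|S|\ge 3$, $f$ is well-behaved and $|\mathcal P|=|A|$, then $\mathrm{mms}(\mu)=S$ or $\mathrm{mms}(\mu)=S\setminus\{s\}$ for some $s\in S\setminus\{e\}$.
   Context: For a finite $S\subseteq G$, $A^S$ denotes the set of all functions $S\to A$ (patterns), and $A^G$ the set of all functions $G\to A$ (configurations). The shift action of $G$ on $A^G$ is $(g\cdot x)(h)=x(g^{-1}h)$. A local map $\mu:A^S\to A$ defines the cellular automaton $\tau:A^G\to A^G$, $\tau(x)(g)=\mu((g^{-1}\cdot x)|_S)$ for all $x\in A^G$, $g\in G$. A finite set $T\subseteq G$ is a memory set of $\tau$ if some local map $A^T\to A$ defines $\tau$. The minimal memory set $\mathrm{mms}(\mu)$ is the intersection of all memory sets of the cellular automaton defined by $\mu$. The pair $(\mathcal P,f)$ generates $\mu$ if $\mathcal P=\{z\in A^S:\mu(z)\neq z(e)\}$ and $f:\mathcal P\to A$ is the restriction of $\mu$ to $\mathcal P$. The function $f$ is well-behaved if for all $p,q\in\mathcal P$: $p(e)=q(e)$ if and only if $f(p)=f(q)$. *)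

(* Defs.v *)
From HB Require Import structures.
From mathcomp Require Import all_boot.
From mathcomp Require Import monoid.
From mathcomp Require Import finmap.

Set Implicit Arguments.
Unset Strict Implicit.
Unset Printing Implicit Defensive.

Local Open Scope fset_scope.
Local Open Scope group_scope.

Section CA.
Variables (G : groupType) (A : finType).

Definition config := G -> A.

Definition shift (g : G) (x : config) : config := fun h => x (g^-1 * h).

Definition restr (S : {fset G}) (x : config) : {ffun S -> A} :=
  [ffun s => x (fsval s)].

Definition ca (S : {fset G}) (mu : {ffun S -> A} -> A) : config -> config :=
  fun x g => mu (restr S (shift g^-1 x)).

Definition memory_set (S : {fset G}) (mu : {ffun S -> A} -> A) (T : {fset G}) : Prop :=
  exists nu : {ffun T -> A} -> A, ca nu = ca mu.

Definition mms (S : {fset G}) (mu : {ffun S -> A} -> A) (g : G) : Prop :=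
  forall T : {fset G}, memory_set mu T -> g \in T.

(* the set P of the generating pair (P, f): patterns z with mu z <> z(e) *)
Definition patterns (S : {fset G}) (He : 1 \in S) (mu : {ffun S -> A} -> A)
  : {set {ffun S -> A}} := [set z | mu z != z [` He]].

(* f := restriction of mu to P is well-behaved *)
Definition well_behaved (S : {fset G}) (He : 1 \in S) (mu : {ffun S -> A} -> A) : Prop :=
  forall p q, p \in patterns He mu -> q \in patterns He mu ->
    (p [` He] = q [` He] <-> mu p = mu q).

End CA.

(* Main.v *)
From mathcomp Require Import zify.
From Stdlib Require Import FunctionalExtensionality.
Require Import Defs.
From HB Require Import structures.
From mathcomp Require Import all_boot.
From mathcomp Require Import monoid.
From mathcomp Require Import finmap.
Set Implicit Arguments.
Unset Strict Implicit.
Unset Printing Implicit Defensive.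

Definition upd (I A : finType) (z : {ffun I -> A}) (s : I) (a : A) : {ffun I -> A} :=
  [ffun t => if t == s then a else z t].

Lemma updE (I A : finType) (z : {ffun I -> A}) s a t :
  upd z s a t = if t == s then a else z t.
Proof. by rewrite ffunE. Qed.

Lemma upd_upd (I A : finType) (z : {ffun I -> A}) s a b : upd (upd z s a) s b = upd z s b.
Proof. by apply/ffunP => t; rewrite !updE; case: eqP. Qed.

Lemma upd_id (I A : finType) (z : {ffun I -> A}) s : upd z s (z s) = z.
Proof. by apply/ffunP => t; rewrite !updE; case: eqP => // ->. Qed.

Lemma count_fiber (I A : finType) (s : I) (a0 : A) (X : {set {ffun I -> A}}) :
  (forall z a, (upd z s a \in X) = (z \in X)) ->
  #|X| = (#|A| * #|[set z in X | z s == a0]|)%N.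
Proof.
move=> HX.
set Q := [set z in X | z s == a0].
have -> : X = [set upd p.2 s p.1 | p in setX [set: A] Q].
  apply/setP => z; apply/idP/idP.
  - move=> zX; apply/imsetP; exists (z s, upd z s a0).
      by rewrite !inE /= HX zX updE !eqxx.
    rewrite /=.  by rewrite upd_upd upd_id.
  - case/imsetP => -[a w]; rewrite !inE /= => /andP[wX _] ->.
    by rewrite HX.
rewrite card_in_imset ?cardsX ?cardsT //.
move=> [a w] [b v]; rewrite !inE /= => /andP[_ /eqP wa] /andP[_ /eqP vb] E.
have ab : a = b by move: (congr1 (fun f : {ffun I -> A} => f s) E); rewrite !updE eqxx.
subst b; congr pair; apply/ffunP => t.
move: (congr1 (fun f : {ffun I -> A} => f t) E); rewrite !updE; case: eqP => [->|] //; by rewrite wa vb.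
Qed.

Local Open Scope fset_scope.

Lemma shift1 (G : groupType) (A : finType) (x : config G A) : shift (1^-1)%g x = x.
Proof. by apply: functional_extensionality_dep => h; rewrite /shift invg1 invg1 mul1g. Qed.

Lemma depends_mms (G : groupType) (A : finType) (S : {fset G})
  (mu : {ffun S -> A} -> A) (s : S) z a :
  mu (upd z s a) != mu z -> mms mu (fsval s).
Proof.
move=> Hne T [nu Hnu]; apply/negPn/negP => sT.
pose x : config G A := fun h => if insub h is Some t then z t else z s.
pose x' : config G A := fun h => if h == fsval s then a else x h.
have Ex : restr S x = z.
  apply/ffunP => t; rewrite ffunE /x.
  case: insubP => [u _ /val_inj -> // | /negP[]]; exact: valP.
have Ex' : restr S x' = upd z s a.
  apply/ffunP => t; rewrite !ffunE /x' /x.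
  have -> : (fsval t == fsval s) = (t == s) by rewrite (inj_eq val_inj).
  case: (t == s) => //.
  case: insubP => [u _ /val_inj -> // | /negP[]]; exact: valP.
have ET : restr T x = restr T x'.
  apply/ffunP => t; rewrite !ffunE /x'.
  case: eqP => // E; case/negP: sT; rewrite -E; exact: valP.
have H1 := congr1 (fun F => F x 1%g) Hnu.
have H2 := congr1 (fun F => F x' 1%g) Hnu.
move: H1 H2; rewrite /ca /= !shift1 Ex Ex' ET => ->.
by move=> E; move/eqP: Hne; rewrite E.
Qed.

Lemma mms_sub (G : groupType) (A : finType) (S : {fset G})
  (mu : {ffun S -> A} -> A) g : mms mu g -> g \in S.
Proof. by move=> H; apply: H; exists mu. Qed.

Lemma memory_remove (G : groupType) (A : finType) (S : {fset G})
  (mu : {ffun S -> A} -> A) (s : S) (a0 : A) :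
  (forall z a, mu (upd z s a) = mu z) -> memory_set mu (S `\ fsval s).
Proof.
move=> Hind.
pose ext (w : {ffun (S `\ fsval s) -> A}) : {ffun S -> A} :=
  [ffun t : S => if (insub (fsval t) : option (S `\ fsval s)) is Some u then w u else a0].
exists (fun w => mu (ext w)).
apply: functional_extensionality_dep => x; apply: functional_extensionality_dep => g.
rewrite /ca; set y := shift _ x.
suff -> : ext (restr (S `\ fsval s) y) = upd (restr S y) s a0 by rewrite Hind.
apply/ffunP => t; rewrite !ffunE.
case: insubP => [u Hu Eu | Hn].
  rewrite ffunE Eu; case: eqP => // E; move: Hu; by rewrite E in_fsetD1 eqxx.
case: eqP => // /eqP E; case/negP: Hn; rewrite in_fsetD1 (inj_eq val_inj) E /=; exact: valP.
Qed.

Definition indepb (G : groupType) (A : finType) (S : {fset G})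
  (mu : {ffun S -> A} -> A) (s : S) :=
  [forall z, forall a, mu (upd z s a) == mu z].

Lemma indepP (G : groupType) (A : finType) (S : {fset G})
  (mu : {ffun S -> A} -> A) (s : S) :
  indepb mu s -> forall z a, mu (upd z s a) = mu z.
Proof. by move=> /forallP H z a; move/forallP: (H z) => /(_ a) /eqP. Qed.

Lemma notindep_mms (G : groupType) (A : finType) (S : {fset G})
  (mu : {ffun S -> A} -> A) (s : S) :
  ~~ indepb mu s -> mms mu (fsval s).
Proof. by case/forallPn => z /forallPn [a Ha]; exact: (depends_mms Ha). Qed.

Lemma card_all (G : groupType) (A : finType) (S : {fset G}) :
  #|{ffun S -> A}| = (#|A| ^ #|` S|)%N.
Proof. by rewrite card_ffun cardfE. Qed.

Lemma card_fix (G : groupType) (A : finType) (S : {fset G}) (e : S) (a0 : A) :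
  (#|A| ^ #|` S| = #|A| * #|[set z : {ffun S -> A} | z e == a0]|)%N.
Proof.
rewrite -card_all -[#|{ffun S -> A}|]cardsT (@count_fiber _ _ e a0 [set: {ffun S -> A}]).
  by congr (_ * _)%N; apply: eq_card => z; rewrite !inE.
by move=> z a; rewrite !inE.
Qed.

Lemma card_P_e (G : groupType) (A : finType) (S : {fset G}) (He : 1%g \in S)
  (mu : {ffun S -> A} -> A) (a0 : A) :
  indepb mu [` He] ->
  (#|patterns He mu| =
    #|A| * #|[set z : {ffun S -> A} | z [` He] == a0]| - #|[set z : {ffun S -> A} | z [` He] == a0]|)%N.
Proof.
move/indepP => Hi; set e := [` He]; set M := [set z : {ffun S -> A} | z e == a0].
have HC : #|~: patterns He mu| = #|M|.
  have -> : M = [set upd z e a0 | z in ~: patterns He mu].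
    apply/setP => w; rewrite inE; apply/idP/idP.
      move/eqP => we; apply/imsetP; exists (upd w e (mu w)).
        by rewrite !inE negbK Hi updE eqxx.
      by rewrite upd_upd -we upd_id.
    by case/imsetP => z _ ->; rewrite updE eqxx.
  rewrite card_in_imset //.
  move=> z z'; rewrite !inE !negbK => /eqP hz /eqP hz' E.
  have : z e = z' e by rewrite -hz -hz' -(Hi z a0) -(Hi z' a0) E.
  move=> ee; apply/ffunP => t; have := congr1 (fun f : {ffun S -> A} => f t) E.
  by rewrite !updE; case: eqP => [-> _|_ //].
have := cardsC (patterns He mu); rewrite HC card_all (card_fix e a0) -/M.
move=> <-; by rewrite addnK.
Qed.

Lemma card_P_s (G : groupType) (A : finType) (S : {fset G}) (He : 1%g \in S)
  (mu : {ffun S -> A} -> A) (a0 : A) (s : S) :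
  s != [` He] -> indepb mu s ->
  (#|patterns He mu| = #|A| * #|[set z in patterns He mu | z s == a0]|)%N.
Proof.
move=> se /indepP Hi; apply: count_fiber => z a.
by rewrite !inE Hi updE [[` He] == s]eq_sym (negbTE se).
Qed.

Lemma card_P_ss (G : groupType) (A : finType) (S : {fset G}) (He : 1%g \in S)
  (mu : {ffun S -> A} -> A) (a0 : A) (s1 s2 : S) :
  s1 != [` He] -> s2 != [` He] -> s1 != s2 -> indepb mu s1 -> indepb mu s2 ->
  (#|A| * #|A| %| #|patterns He mu|)%N.
Proof.
move=> s1e s2e s12 H1 H2.
rewrite (card_P_s a0 s1e H1) (@count_fiber _ _ s2 a0 [set z in patterns He mu | z s1 == a0]).
  by rewrite mulnA dvdn_mulr.
move=> z a; move/indepP: H2 => Hi.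
by rewrite !inE Hi !updE [[` He] == s2]eq_sym (negbTE s2e) (negbTE s12).
Qed.

Unset Implicit Arguments.
Local Open Scope group_scope.

Theorem theorem1 (G : groupType) (A : finType) (S : {fset G}) (He : 1 \in S)
    (mu : {ffun S -> A} -> A) :
  (1 < #|A|)%N -> (1 < #|` S|)%N ->
  [/\ (#|patterns He mu| <> #|A| ^ #|` S| - #|A| ^ (#|` S| - 1))%N -> mms mu 1,
      ~~ (#|A| %| #|patterns He mu|)%N -> (forall g, mms mu g <-> g \in S)
    & (2 < #|` S|)%N -> well_behaved He mu -> #|patterns He mu| = #|A| ->
      (forall g, mms mu g <-> g \in S) \/
      (exists2 s, s \in S & s != 1 /\ (forall g, mms mu g <-> g \in S `\ s))].
Proof.
Local Open Scope nat_scope.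
move=> hA hS.
case/card_gt0P: (ltnW hA) => a0 _.
have Hnm := card_fix [` He] a0.
have Pe := @card_P_e G A S He mu a0.
set e := [` He] in Hnm Pe *.
set n := #|A| in hA Hnm Pe *.
set k := #|` S| in hS Hnm *.
set M := [set z : {ffun S -> A} | z e == a0] in Hnm Pe.
set m := #|M| in Hnm Pe.
have n0 : (0 < n)%N by apply: ltnW.
have Hm : m = (n ^ (k - 1))%N.
  apply/eqP; rewrite -(eqn_pmul2l n0) -Hnm -expnS subn1 prednK //; exact: ltnW.
split.
- move=> Hne; case Hi: (indepb mu e).
    by exfalso; apply: Hne; rewrite (Pe Hi) Hnm -Hm.
  exact: (notindep_mms (negbT Hi)).
- move=> Hnd g; split; first exact: mms_sub.
  move=> Hg; case Hi : (indepb mu [` Hg]); last exact: (notindep_mms (negbT Hi)).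
  exfalso; apply: (negP Hnd).
  case: (eqVneq [` Hg] e) => [te|tne].
    rewrite te in Hi; rewrite (Pe Hi) Hm.
    apply: dvdn_sub; first exact: dvdn_mulr.
    by apply: dvdn_exp => //; rewrite subn_gt0.
  by rewrite (card_P_s a0 tne Hi) dvdn_mulr.
- move=> hk Hwb HP.
  have noe : ~~ indepb mu e.
    apply/negP => Hi; move: HP; rewrite (Pe Hi).
    have : (n * n <= m)%N.
      rewrite Hm (_ : k - 1 = (k - 3).+2)%N; last by rewrite /k; lia.
      rewrite !expnS mulnA -{1}(muln1 (n * n)) leq_mul2l expn_gt0 n0 orbT //.
    move=> h1 h2; move: hA h1 h2; clearbody m; clear; nia.
  case Hex: [exists t, indepb mu t].
  + right; case/existsP: Hex => s0 Hs0.
    have s0e : s0 != e by apply: contraNneq noe => <-.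
    exists (fsval s0); first exact: fsvalP.
    split.
      apply: contra s0e => /eqP E; apply/eqP/val_inj; exact: E.
    move=> g; split.
      by move=> Hg; apply: Hg; exact: (memory_remove a0 (indepP Hs0)).
    rewrite in_fsetD1 => /andP[gs Hg].
    case Hi: (indepb mu [` Hg]); last exact: (notindep_mms (negbT Hi)).
    exfalso.
    have te : [` Hg] != e by apply: contraNneq noe => <-.
    have ts : [` Hg] != s0 by apply: contra gs => /eqP/(congr1 val) /= ->.
    have := card_P_ss a0 te s0e ts Hi Hs0; rewrite HP => /(dvdn_leq n0).
    by move: hA; clear; nia.
  + left => g; split; first exact: mms_sub.
    move=> Hg; apply: (notindep_mms (s := [` Hg])).
    by apply: contraFN Hex => H; apply/existsP; exists [` Hg].
Qed.
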